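(* Let $\mathcal{H}=(V,E)$ be a hypergraph with no repeated hyperedge, $V=\{v_1,\dots,v_n\}$, of range $k_{\max}\geq 2$, and let $\mathcal{A}_{\mathcal{H}}=(a_{i_1\dots i_{k_{\max}}})$ be its layered e-adjacency tensor (defined in the context). Let $d_i=\deg(v_i)$ for $i\in\{1,\dots,n\}$ and $d_{n+i}=\deg(y_i)$ for $i\in\{1,\dots,k_{\max}-1\}$ (degrees in the layered uniform hypergraph, defined in the context). Then for every $i\in\{1,\dots,n+k_{\max}-1\}$, $$\sum_{\substack{i_2,\dots,i_{k_{\max}}=1\\ \delta_{i i_2\dots i_{k_{\max}}}=0}}^{n+k_{\max}-1} a_{i i_2\dots i_{k_{\max}}} = d_i,$$ where $\delta_{i i_2\dots i_{k_{\max}}}$ equals $1$ if $i=i_2=\dots=i_{k_{\max}}$ and $0$ otherwise. Moreover, for every $j\in\{2,\dots,k_{\max}-1\}$, $|\{e\in E: |e|=j\}| = d_{n+j}-d_{n+j-1}$, and $|\{e\in E:|e|=1\}|=d_{n+1}$.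
   Context: A hypergraph $\mathcal{H}=(V,E)$ on the vertex set $V=\{v_1,\dots,v_n\}$ is a family $E$ of nonempty subsets (hyperedges) of $V$; it has no repeated hyperedge if its hyperedges are pairwise distinct. The range is $k_{\max}=\max\{|e|:e\in E\}$, and $\deg(v_i)$ is the number of hyperedges containing $v_i$. Introduce $k_{\max}-1$ new pairwise distinct vertices $y_1,\dots,y_{k_{\max}-1}\notin V$. The layered uniform hypergraph of $\mathcal{H}$ is the $k_{\max}$-uniform hypergraph on $V\cup\{y_1,\dots,y_{k_{\max}-1}\}$ whose hyperedges are $\hat e = e\cup\{y_{|e|},y_{|e|+1},\dots,y_{k_{\max}-1}\}$ for $e\in E$ (so nothing is added when $|e|=k_{\max}$); $\deg(y_i)$ is the number of such hyperedges containing $y_i$. The layered e-adjacency tensor $\mathcal{A}_{\mathcal{H}}$ is the symmetric hypermatrix of order $k_{\max}$ and dimension $n+k_{\max}-1$ (indices $1,\dots,n$ correspond to $v_1,\dots,v_n$, index $n+l$ corresponds to $y_l$) defined as follows: for each hyperedge $e=\{v_{i_1},\dots,v_{i_j}\}\in E$ with $i_1<\dots<i_j$, set $i_l=n+l-1$ for $l\in\{j+1,\dots,k_{\max}\}$; then for every permutation $\sigma$ of $\{1,\dots,k_{\max}\}$, the entry with index tuple $(i_{\sigma(1)},\dots,i_{\sigma(k_{\max})})$ equals $\frac{1}{(k_{\max}-1)!}$. All other entries are $0$. *)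

(* Defs.v *)
From mathcomp Require Import all_boot all_order all_algebra.
Set Implicit Arguments. Unset Strict Implicit. Unset Printing Implicit Defensive.
Import Order.TTheory GRing.Theory Num.Theory.

(* A hypergraph on V = {v_1,..,v_n} is encoded with vertices 'I_n
   (0-based: v_{i+1} <-> i) and hyperedge set E : {set {set 'I_n}}
   (a set, hence no repeated hyperedge). *)

Definition kmax (n : nat) (E : {set {set 'I_n}}) : nat := \max_(e in E) #|e|.

Definition ldim (n : nat) (E : {set {set 'I_n}}) : nat := n + kmax E - 1.

(* 0-based global indices: v_{i+1} <-> i (i < n), y_m <-> n + m - 1 (1 <= m).
   hat_idx E e = index sequence (i_1, ..., i_{k_max}) of the layered hyperedge
   \hat e = e \cup {y_{|e|}, ..., y_{k_max - 1}}: the vertices of e in increasing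
   order followed by the indices of y_{|e|}, ..., y_{k_max-1}. *)
Definition hat_idx (n : nat) (E : {set {set 'I_n}}) (e : {set 'I_n}) : seq nat :=
  [seq val v | v <- enum e] ++
  [seq n + l | l <- iota (#|e|.-1) (kmax E - #|e|)].

Definition ldeg (n : nat) (E : {set {set 'I_n}}) (x : nat) : nat :=
  #|[set e in E | x \in hat_idx E e]|.

Definition layered_tensor (R : numFieldType) (n : nat) (E : {set {set 'I_n}})
    (s : seq 'I_(ldim E)) : R :=
  if [exists e in E, perm_eq (map val s) (hat_idx E e)]
  then (((kmax E).-1)`!%:R)^-1%R else 0%R.

(* Main.v *)
Require Import Defs.
From mathcomp Require Import all_boot all_order all_algebra.
From mathcomp Require Import zify.
Import Order.TTheory GRing.Theory Num.Theory.

Section Aux.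
Variables (n : nat) (E : {set {set 'I_n}}).

Lemma hat_vmem (e : {set 'I_n}) (v : 'I_n) : (val v \in hat_idx E e) = (v \in e).
Proof.
rewrite /hat_idx mem_cat (mem_map val_inj) mem_enum.
case: (v \in e) => //=; apply/negP => /mapP [l _] hl; have := ltn_ord v; lia.
Qed.

Lemma hat_ymem (e : {set 'I_n}) (l : nat) : e \in E -> e != set0 ->
  l < kmax E - 1 -> (n + l \in hat_idx E e) = (#|e| <= l.+1).
Proof.
move=> eE ne ll.
have h1 : 0 < #|e| by rewrite card_gt0.
have h2 : #|e| <= kmax E by rewrite /kmax; apply: (@leq_bigmax_cond _ (mem E) (fun e => #|e|)).
rewrite /hat_idx mem_cat.
have -> : (n + l \in [seq val v | v <- enum e]) = false.
  apply/negP => /mapP [v _] hv; have := ltn_ord v; rewrite -hv; lia.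
rewrite /= (mem_map (@addnI n)) mem_iota; apply/idP/idP; lia.
Qed.

Lemma hat_uniq (e : {set 'I_n}) : uniq (hat_idx E e).
Proof.
rewrite /hat_idx cat_uniq (map_inj_uniq val_inj) enum_uniq /=.
rewrite (map_inj_uniq (@addnI n)) iota_uniq andbT.
apply/hasPn => x /mapP [l _ ->]; apply/negP => /mapP [v _] hv.
have := ltn_ord v; lia.
Qed.

Lemma hat_lt (e : {set 'I_n}) x : e \in E -> e != set0 -> x \in hat_idx E e -> x < ldim E.
Proof.
move=> eE ne.
have h1 : 0 < #|e| by rewrite card_gt0.
have h2 : #|e| <= kmax E by rewrite /kmax; apply: (@leq_bigmax_cond _ (mem E) (fun e => #|e|)).
rewrite /ldim /hat_idx mem_cat => /orP [/mapP [v _ ->] | /mapP [l]].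
  have := ltn_ord v; rewrite /=; lia.
rewrite mem_iota => hl ->; lia.
Qed.

Lemma hat_size (e : {set 'I_n}) : e \in E -> size (hat_idx E e) = kmax E.
Proof.
move=> eE.
have h2 : #|e| <= kmax E by rewrite /kmax; apply: (@leq_bigmax_cond _ (mem E) (fun e => #|e|)).
rewrite /hat_idx size_cat !size_map size_iota -cardE; exact: subnKC.
Qed.

Lemma hat_inj (e1 e2 : {set 'I_n}) : perm_eq (hat_idx E e1) (hat_idx E e2) -> e1 = e2.
Proof.
move=> /perm_mem h; apply/setP => v; by rewrite -!hat_vmem h.
Qed.

End Aux.
Lemma card_S (N : nat) (r : seq nat) : uniq r -> all (fun x => x < N) r ->
  #|[set x : 'I_N | val x \in r]| = size r.
Proof.
move=> ur /allP rlt.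
rewrite cardsE cardE /enum_mem -enumT /=.
rewrite -(size_map val) -(filter_map val (mem r)) val_enum_ord.
apply: perm_size; apply: uniq_perm; first by rewrite filter_uniq // iota_uniq.
  by [].
move=> x; rewrite mem_filter mem_iota /=; case xr: (x \in r) => //=.
by have := rlt _ xr; lia.
Qed.

Lemma count_f (m N : nat) (r : seq nat) : uniq r -> all (fun x => x < N) r ->
  size r = m ->
  #|[set f : {ffun 'I_m -> 'I_N} | perm_eq (map val (codom f)) r]| = m`!.
Proof.
move=> ur rlt sr.
have cS := @card_S N r ur rlt.
rewrite -ffactnn; have -> : m ^_ m = #|[set x : 'I_N | val x \in r]| ^_ #|'I_m| by rewrite cS sr card_ord.
rewrite -card_inj_ffuns_on.
apply: eq_card => f; rewrite !inE.
apply/idP/idP.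
  move=> pf; have uf := perm_uniq pf; rewrite ur (map_inj_uniq val_inj) in uf.
  apply/andP; split.
    apply/ffun_onP => x; rewrite inE -(perm_mem pf); apply: map_f; exact: codom_f.
  exact: uf.
case/andP => /ffun_onP fon uf.
have uf' : uniq (map val (codom f)) by rewrite (map_inj_uniq val_inj).
apply: uniq_perm => //.
have sub : {subset map val (codom f) <= r}.
  move=> x /mapP [y /codomP [z ->] ->]; have := fon z; by rewrite inE.
have := uniq_min_size uf' sub; case; first by rewrite size_map size_codom card_ord sr.
by [].
Qed.

Lemma sum_bool_card (T : finType) (p : pred T) :
  (\sum_(x : T) (p x : nat))%N = #|[set x | p x]|.
Proof. by rewrite -sum1dep_card [RHS]big_mkcond; apply: eq_bigr => x _; case: (p x). Qed.

Lemma sum_bool_card_in (T : finType) (A : {set T}) (p : pred T) :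
  (\sum_(x in A) (p x : nat))%N = #|[set x in A | p x]|.
Proof. by rewrite -sum1dep_card [RHS]big_mkcondr; apply: eq_bigr => x _; case: (p x). Qed.

Theorem mainTheorem1 (R : numFieldType) (n : nat) (E : {set {set 'I_n}})
    (hne : forall e, e \in E -> e != set0)
    (hk : 2 <= kmax E) :
  (forall i : 'I_(ldim E),
     (\sum_(f : {ffun 'I_((kmax E).-1) -> 'I_(ldim E)} | ~~ [forall j, f j == i])
        @layered_tensor R n E (i :: codom f))%R = ((ldeg E i)%:R)%R) /\
  (forall j : nat, 2 <= j <= (kmax E).-1 ->
     ((#|[set e in E | #|e| == j]|)%:Z)%R
       = ((ldeg E (n + j - 1))%:Z - (ldeg E (n + j - 2))%:Z)%R) /\
  #|[set e in E | #|e| == 1]| = ldeg E n.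
Proof.
have ldegy : forall l, l < kmax E - 1 ->
    ldeg E (n + l) = #|[set e in E | #|e| <= l.+1]|.
  move=> l hl; apply: eq_card => e; rewrite !inE.
  case eE: (e \in E) => //=; by apply: hat_ymem => //; apply: hne.
split; last split.
- move=> i.
  have k1 : 0 < (kmax E).-1 by lia.
  set c : R := (((kmax E).-1)`!%:R)^-1%R.
  have zero : forall f : {ffun 'I_((kmax E).-1) -> 'I_(ldim E)},
      [forall j, f j == i] -> layered_tensor R (i :: codom f) = 0%R.
    move=> f /forallP fi; rewrite /layered_tensor; case: existsP => // [[e /andP [eE pe]]].
    have := perm_uniq pe; rewrite hat_uniq /= => /andP [/negP nin _].
    exfalso; apply: nin; have /eqP <- := fi (Ordinal k1); apply: map_f; exact: codom_f.
  have -> : (\sum_(f : {ffun 'I_((kmax E).-1) -> 'I_(ldim E)} | ~~ [forall j, f j == i]) layered_tensor R (i :: codom f))%R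
      = (\sum_(f : {ffun 'I_((kmax E).-1) -> 'I_(ldim E)}) layered_tensor R (i :: codom f))%R.
    by apply: big_rmcond => f; rewrite negbK; exact: zero.
  have step2 : forall f : {ffun 'I_((kmax E).-1) -> 'I_(ldim E)},
      layered_tensor R (i :: codom f) =
      (\sum_(e in E) ((perm_eq (val i :: map val (codom f)) (hat_idx E e))%:R * c))%R.
    move=> f; rewrite /layered_tensor /=; case: existsP => [[e0 /andP [e0E pe0]] | ne].
      rewrite (bigD1 e0) //= pe0 mul1r big1 ?addr0 // => e /andP [eE nee].
      case pe: (perm_eq _ _); last by rewrite mul0r.
      exfalso; move/eqP: nee; apply; apply: hat_inj; rewrite perm_sym in pe; exact: perm_trans pe pe0.
    rewrite big1 // => e eE; case pe: (perm_eq _ _); last by rewrite mul0r.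
    by exfalso; apply: ne; exists e; rewrite eE pe.
  rewrite (eq_bigr _ (fun f _ => step2 f)) exchange_big /=.
  have step3 : forall e, e \in E ->
      (\sum_(f : {ffun 'I_((kmax E).-1) -> 'I_(ldim E)})
         ((perm_eq (val i :: map val (codom f)) (hat_idx E e))%:R * c))%R
      = ((val i \in hat_idx E e) : nat)%:R%R.
    move=> e eE; rewrite -big_distrl /= -natr_sum.
    rewrite sum_bool_card.
    case: (boolP (val i \in hat_idx E e)) => h.
      have -> : #|[set f : {ffun 'I_((kmax E).-1) -> 'I_(ldim E)} |
                   perm_eq (val i :: map val (codom f)) (hat_idx E e)]|
              = #|[set f : {ffun 'I_((kmax E).-1) -> 'I_(ldim E)} |
                   perm_eq (map val (codom f)) (rem (val i) (hat_idx E e))]|.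
        by apply: eq_card => f; rewrite !inE (permPr (perm_to_rem h)) perm_cons.
      rewrite count_f.
      - by rewrite mulfV // pnatr_eq0 -lt0n fact_gt0.
      - exact: rem_uniq (hat_uniq _ _ _).
      - apply/allP => x /mem_rem; apply: hat_lt => //; exact: hne.
      - by rewrite size_rem // hat_size.
    rewrite (_ : #|_| = 0%N) ?mul0r //; apply: eq_card0 => f; rewrite inE.
    apply/negP => /perm_mem pe; move: h; by rewrite -pe mem_head.
  rewrite (eq_bigr _ step3) -natr_sum; congr (_%:R)%R.
  by rewrite sum_bool_card_in.
- move=> j /andP [j2 jk].
  have -> : n + j - 1 = n + j.-1 by lia.
  have -> : n + j - 2 = n + j.-2 by lia.
  rewrite !ldegy; try lia.
  have j1 : j.-1.+1 = j by lia.
  have j2' : j.-2.+1 = j.-1 by lia.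
  rewrite j1 j2'.
  rewrite -(cardsID [set e in E | #|e| <= j.-1] [set e in E | #|e| <= j]) PoszD.
  have -> : [set e in E | #|e| <= j] :&: [set e in E | #|e| <= j.-1] = [set e in E | #|e| <= j.-1].
    apply/setP => e; rewrite !inE; case: (e \in E) => //=; apply/idP/idP; lia.
  have -> : [set e in E | #|e| <= j] :\: [set e in E | #|e| <= j.-1] = [set e in E | #|e| == j].
    apply/setP => e; rewrite !inE; case: (e \in E) => //=; apply/idP/idP; lia.
  by rewrite [X in (X - _)%R]addrC addrK.
- have := ldegy 0; rewrite addn0 => ->; last lia.
  apply: eq_card => e; rewrite !inE; case eE: (e \in E) => //=.
  have := hne _ eE; rewrite -card_gt0; by case: #|e| => [|[|m]].
Qed.
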